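(* Let $\tau\in F_2$ and let $a=(0,0)$, $b\in\{0,\tfrac12\}^2$. Then $$|\theta_{a,b}(0,\tau)|\ge 2-\Big(1+\Big(2+\frac{\sqrt2}{\sqrt{\operatorname{Im}\tau_1}}\Big)e^{-\pi\operatorname{Im}\tau_1/2}\Big)\Big(1+\Big(2+\frac{\sqrt2}{\sqrt{\operatorname{Im}\tau_2}}\Big)e^{-\pi\operatorname{Im}\tau_2/2}\Big),$$ and this lower bound is positive when $\operatorname{Im}\tau_1\ge 2$.
   Context: $F_2$ is the standard Siegel fundamental domain for $\mathrm{Sp}_4(\mathbb{Z})$ acting on symmetric complex $2\times2$ matrices $\tau=\begin{pmatrix}\tau_1&\tau_{12}\\ \tau_{12}&\tau_2\end{pmatrix}$ with $\operatorname{Im}\tau>0$; every $\tau\in F_2$ satisfies $|\operatorname{Re}\tau_{ij}|\le 1/2$, $\operatorname{Im}\tau_2\ge\operatorname{Im}\tau_1\ge 2\operatorname{Im}\tau_{12}\ge 0$, $\operatorname{Im}\tau_1\ge\sqrt3/2$. $\theta_{a,b}(Z,\tau)=\sum_{n\in\mathbb{Z}^2}\exp\big(2i\pi(\tfrac12{}^t(n+a)\tau(n+a)+{}^t(n+a)(Z+b))\big)$. *)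

(* Defs.v *)
From Stdlib Require Export Reals ZArith List.
Open Scope R_scope.

(** A point tau = X + i Y of the Siegel upper half space of degree 2, with
    X = [[x1, x12],[x12, x2]] and Y = [[y1, y12],[y12, y2]] (symmetric). *)
Record Siegel2 := mkSiegel2 {
  x1 : R; x12 : R; x2 : R;
  y1 : R; y12 : R; y2 : R }.

Definition in_H2 (t : Siegel2) : Prop :=
  0 < y1 t /\ 0 < y1 t * y2 t - y12 t * y12 t.

(** 2x2 integer matrices and Sp_4(Z) = { [[A,B],[C,D]] : M^T J M = J },
    written as A^T C, B^T D symmetric and A^T D - C^T B = I. *)
Record M2Z := mkM2Z { e11 : Z; e12 : Z; e21 : Z; e22 : Z }.

Definition tr2 (M : M2Z) : M2Z := mkM2Z (e11 M) (e21 M) (e12 M) (e22 M).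
Definition mul2 (M N : M2Z) : M2Z :=
  mkM2Z (e11 M * e11 N + e12 M * e21 N)%Z (e11 M * e12 N + e12 M * e22 N)%Z
        (e21 M * e11 N + e22 M * e21 N)%Z (e21 M * e12 N + e22 M * e22 N)%Z.
Definition sym2 (M : M2Z) : Prop := e12 M = e21 M.

Definition is_Sp4Z (A B C D : M2Z) : Prop :=
  sym2 (mul2 (tr2 A) C) /\ sym2 (mul2 (tr2 B) D) /\
  (e11 (mul2 (tr2 A) D) - e11 (mul2 (tr2 C) B) = 1)%Z /\
  (e12 (mul2 (tr2 A) D) - e12 (mul2 (tr2 C) B) = 0)%Z /\
  (e21 (mul2 (tr2 A) D) - e21 (mul2 (tr2 C) B) = 0)%Z /\
  (e22 (mul2 (tr2 A) D) - e22 (mul2 (tr2 C) B) = 1)%Z.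

(** |det(C tau + D)|^2, where C tau + D = P + i Q with P = C X + D, Q = C Y. *)
Definition det_CtauD_norm2 (C D : M2Z) (t : Siegel2) : R :=
  let c11 := IZR (e11 C) in let c12 := IZR (e12 C) in
  let c21 := IZR (e21 C) in let c22 := IZR (e22 C) in
  let p11 := c11 * x1 t + c12 * x12 t + IZR (e11 D) in
  let p12 := c11 * x12 t + c12 * x2 t + IZR (e12 D) in
  let p21 := c21 * x1 t + c22 * x12 t + IZR (e21 D) in
  let p22 := c21 * x12 t + c22 * x2 t + IZR (e22 D) in
  let q11 := c11 * y1 t + c12 * y12 t in
  let q12 := c11 * y12 t + c12 * y2 t in
  let q21 := c21 * y1 t + c22 * y12 t in
  let q22 := c21 * y12 t + c22 * y2 t in
  let re := p11 * p22 - q11 * q22 - (p12 * p21 - q12 * q21) in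
  let im := p11 * q22 + q11 * p22 - (p12 * q21 + q12 * p21) in
  re * re + im * im.

Definition in_F2 (t : Siegel2) : Prop :=
  in_H2 t /\
  Rabs (x1 t) <= 1/2 /\ Rabs (x12 t) <= 1/2 /\ Rabs (x2 t) <= 1/2 /\
  (* Minkowski reduction of Y *)
  0 <= 2 * y12 t /\ 2 * y12 t <= y1 t /\ y1 t <= y2 t /\
  (* maximal height: |det(C tau + D)| >= 1 for all symplectic matrices *)
  (forall A B C D : M2Z, is_Sp4Z A B C D -> 1 <= det_CtauD_norm2 C D t).

(** Term of the theta series for n = (n1,n2), characteristics a = (a1,a2),
    b = (b1,b2) and Z = (zr1 + i zi1, zr2 + i zi2):
    exp(2 i pi (1/2 m^T tau m + m^T (Z + b))) with m = n + a,
    returned as (real part, imaginary part). *)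
Definition theta_term (a1 a2 b1 b2 zr1 zi1 zr2 zi2 : R) (t : Siegel2)
  (n1 n2 : Z) : R * R :=
  let m1 := IZR n1 + a1 in let m2 := IZR n2 + a2 in
  let phase := / 2 * (x1 t * m1 * m1 + 2 * x12 t * m1 * m2 + x2 t * m2 * m2)
               + m1 * (zr1 + b1) + m2 * (zr2 + b2) in
  let modulus := exp (- PI * (y1 t * m1 * m1 + 2 * y12 t * m1 * m2 + y2 t * m2 * m2)
                      - 2 * PI * (m1 * zi1 + m2 * zi2)) in
  (modulus * cos (2 * PI * phase), modulus * sin (2 * PI * phase)).

Definition zrange (N : nat) : list Z :=
  map (fun k => (Z.of_nat k - Z.of_nat N)%Z) (seq 0 (2 * N + 1)).

Definition sumR (l : list R) : R := fold_right Rplus 0 l.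

Definition theta_partial (a1 a2 b1 b2 zr1 zi1 zr2 zi2 : R) (t : Siegel2)
  (N : nat) : R * R :=
  (sumR (map (fun n1 => sumR (map (fun n2 =>
      fst (theta_term a1 a2 b1 b2 zr1 zi1 zr2 zi2 t n1 n2)) (zrange N))) (zrange N)),
   sumR (map (fun n1 => sumR (map (fun n2 =>
      snd (theta_term a1 a2 b1 b2 zr1 zi1 zr2 zi2 t n1 n2)) (zrange N))) (zrange N))).

(** [is_theta a1 a2 b1 b2 zr1 zi1 zr2 zi2 t re im] : theta_{a,b}(Z,tau) = re + i im
    (the series is absolutely convergent on H_2, so its value is the limit of
    the square partial sums). *)
Definition is_theta (a1 a2 b1 b2 zr1 zi1 zr2 zi2 : R) (t : Siegel2) (re im : R) : Prop :=
  Un_cv (fun N => fst (theta_partial a1 a2 b1 b2 zr1 zi1 zr2 zi2 t N)) re /\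
  Un_cv (fun N => snd (theta_partial a1 a2 b1 b2 zr1 zi1 zr2 zi2 t N)) im.

Definition theta_lower_bound (t : Siegel2) : R :=
  2 - (1 + (2 + sqrt 2 / sqrt (y1 t)) * exp (- PI * y1 t / 2))
    * (1 + (2 + sqrt 2 / sqrt (y2 t)) * exp (- PI * y2 t / 2)).

(* Main.v *)
Require Import Defs.
From Stdlib Require Import Reals Lra Lia Psatz ZArith List.
Open Scope R_scope.
Definition S1 (g : Z -> R) (N : nat) : R := sumR (map g (zrange N)).
Lemma sumR_app l1 l2 : sumR (l1 ++ l2) = sumR l1 + sumR l2.
Proof. induction l1; simpl; [lra|rewrite IHl1; lra]. Qed.

Lemma S1_S g N : S1 g (S N) = g (- Z.of_nat (S N))%Z + (S1 g N + g (Z.of_nat (S N))).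
Proof.
  unfold S1, zrange.
  replace (2 * S N + 1)%nat with (S (S (2 * N + 1))) by lia.
  rewrite <- cons_seq, (seq_S (2*N+1) 1), <- seq_shift.
  rewrite !map_cons, !map_app, !map_map, !map_cons.
  rewrite (map_ext (fun x => g (Z.of_nat (S x) - Z.of_nat (S N))%Z)
             (fun k => g (Z.of_nat k - Z.of_nat N)%Z)).
  2:{ intro k. f_equal. lia. }
  change (sumR (?x :: ?l)) with (x + sumR l). rewrite sumR_app.
  change (sumR (?x :: ?l)) with (x + sumR l).
  replace (Z.of_nat 0 - Z.of_nat (S N))%Z with (- Z.of_nat (S N))%Z by lia.
  replace (Z.of_nat (1 + (2 * N + 1)) - Z.of_nat (S N))%Z with (Z.of_nat (S N)) by lia.
  change (sumR (map _ nil)) with 0. lra.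
Qed.

Lemma sumR_map_plus (g h : Z -> R) l :
  sumR (map (fun x => g x + h x) l) = sumR (map g l) + sumR (map h l).
Proof. induction l; simpl; [lra|]. change (sumR (?x :: ?l)) with (x + sumR l) in *. lra. Qed.

Lemma sumR_map_scal (g : Z -> R) c l :
  sumR (map (fun x => c * g x) l) = c * sumR (map g l).
Proof. induction l; simpl; [lra|]. change (sumR (?x :: ?l)) with (x + sumR l) in *. lra. Qed.

Lemma sumR_map_abs (g G : Z -> R) l :
  (forall x, Rabs (g x) <= G x) -> Rabs (sumR (map g l)) <= sumR (map G l).
Proof.
  intro H; induction l; simpl.
  - unfold sumR; simpl. rewrite Rabs_R0; lra.
  - change (sumR (?x :: ?l)) with (x + sumR l) in *.
    eapply Rle_trans; [apply Rabs_triang|]. specialize (H a). lra.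
Qed.

Lemma sumR_map_nonneg (g : Z -> R) l :
  (forall x, 0 <= g x) -> 0 <= sumR (map g l).
Proof.
  intro H; induction l; simpl.
  - unfold sumR; simpl; lra.
  - change (sumR (?x :: ?l)) with (x + sumR l) in *. specialize (H a). lra.
Qed.

Lemma S1_ext g h N : (forall x, g x = h x) -> S1 g N = S1 h N.
Proof. intro H. unfold S1. f_equal. apply map_ext. exact H. Qed.

Lemma S1_0 g : S1 g 0 = g 0%Z.
Proof. unfold S1, zrange. simpl. unfold sumR. simpl. ring. Qed.

Definition D2 (f : Z -> Z -> R) (N : nat) : R := S1 (fun n1 => S1 (fun n2 => f n1 n2) N) N.

Definition B2 (f : Z -> Z -> R) (N : nat) : R :=
  S1 (fun n1 => f n1 (- Z.of_nat (S N))%Z + f n1 (Z.of_nat (S N))) (S N)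
  + S1 (fun n2 => f (- Z.of_nat (S N))%Z n2 + f (Z.of_nat (S N)) n2) N.

Lemma D2_S f N : D2 f (S N) = D2 f N + B2 f N.
Proof.
  unfold D2, B2.
  rewrite (S1_ext (fun n1 => S1 (fun n2 => f n1 n2) (S N))
     (fun n1 => (f n1 (- Z.of_nat (S N))%Z + f n1 (Z.of_nat (S N))) + S1 (fun n2 => f n1 n2) N)).
  2:{ intro x. rewrite S1_S. lra. }
  assert (E1 : forall (g h : Z -> R) M, S1 (fun x => g x + h x) M = S1 g M + S1 h M).
  { intros. unfold S1. apply sumR_map_plus. }
  rewrite E1, (S1_S (fun n1 => S1 (fun n2 => f n1 n2) N) N).
  rewrite (E1 (fun n2 => f (- Z.of_nat (S N))%Z n2) (fun n2 => f (Z.of_nat (S N)) n2)).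
  lra.
Qed.

Lemma B2_abs f F N : (forall x y, Rabs (f x y) <= F x y) -> Rabs (B2 f N) <= B2 F N.
Proof.
  intro H. unfold B2, S1.
  eapply Rle_trans; [apply Rabs_triang|]. apply Rplus_le_compat; apply sumR_map_abs;
  intro x; eapply Rle_trans; try apply Rabs_triang; apply Rplus_le_compat; apply H.
Qed.

Lemma D2_diff f F N k : (forall x y, Rabs (f x y) <= F x y) ->
  Rabs (D2 f (N + k) - D2 f N) <= D2 F (N + k) - D2 F N.
Proof.
  intro H. induction k.
  - rewrite Nat.add_0_r. unfold Rminus. rewrite !Rplus_opp_r, Rabs_R0. lra.
  - rewrite Nat.add_succ_r, !D2_S.
    pose proof (B2_abs f F (N + k) H).
    replace (D2 f (N + k) + B2 f (N + k) - D2 f N) with ((D2 f (N + k) - D2 f N) + B2 f (N + k)) by ring.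
    eapply Rle_trans; [apply Rabs_triang|]. lra.
Qed.

Lemma exp_le x y : x <= y -> exp x <= exp y.
Proof. intro H. destruct (Rle_lt_or_eq_dec _ _ H) as [h|h]; [left; apply exp_increasing; exact h| rewrite h; lra]. Qed.

Definition gg (c : R) (n : Z) : R := exp (- (c * (IZR n * IZR n))).

Lemma gg_pos c n : 0 < gg c n.
Proof. apply exp_pos. Qed.

Lemma S1_gg_geom c N : 0 < c ->
  S1 (gg c) N <= 1 + 2 * exp (- c) * (1 - exp (- (3 * c) * INR N)) / (1 - exp (- (3 * c))).
Proof.
  intro Hc.
  assert (Hr : exp (- (3 * c)) < 1).
  { rewrite <- exp_0. apply exp_increasing. lra. }
  assert (Hr0 : 0 < exp (- (3 * c))) by apply exp_pos.
  induction N.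
rewrite S1_0. unfold gg. simpl INR.
    replace (- (c * (IZR 0 * IZR 0))) with 0 by ring. replace (- (3*c) * 0) with 0 by ring.
    rewrite exp_0. replace (1-1) with 0 by ring. rewrite Rmult_0_r. unfold Rdiv. rewrite Rmult_0_l. lra.
  - rewrite S1_S.
    assert (Hg : gg c (- Z.of_nat (S N))%Z = gg c (Z.of_nat (S N))).
    { unfold gg. rewrite opp_IZR. f_equal. ring. }
    rewrite Hg.
    assert (Hb : gg c (Z.of_nat (S N)) <= exp (- c) * exp (- (3 * c) * INR N)).
    { unfold gg. rewrite <- exp_plus, <- INR_IZR_INZ, S_INR. apply exp_le.
      assert (0 <= INR N * (INR N - 1)).
      { destruct N. simpl; lra. rewrite S_INR. pose proof (pos_INR N). nra. }
      nra. }
    assert (Hx : exp (- (3 * c) * INR (S N)) = exp (- (3 * c) * INR N) * exp (- (3 * c))).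
    { rewrite <- exp_plus. f_equal. rewrite S_INR. ring. }
    rewrite Hx.
    set (x := exp (- (3 * c) * INR N)) in *. set (r := exp (- (3 * c))) in *.
    assert (Hid : (1 - x * r) / (1 - r) = (1 - x) / (1 - r) + x) by (field; lra).
    replace (1 + 2 * exp (- c) * (1 - x * r) / (1 - r)) with (1 + 2 * exp (- c) * ((1 - x * r) / (1 - r))) by (unfold Rdiv; ring).
    rewrite Hid.
    replace (1 + 2 * exp (- c) * (1 - x) / (1 - r)) with (1 + 2 * exp (- c) * ((1 - x) / (1 - r))) in IHN by (unfold Rdiv; ring).
    lra.
Qed.

Lemma S1_gg_bound y N : 1/2 <= y ->
  S1 (gg (PI * y / 2)) N <= 1 + (2 + sqrt 2 / sqrt y) * exp (- PI * y / 2).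
Proof.
  intro Hy.
  pose proof PI2_3_2 as Hpi.
  set (c := PI * y / 2).
  assert (Hc : 0 < c) by (unfold c; nra).
  eapply Rle_trans; [apply S1_gg_geom; exact Hc|].
  replace (- PI * y / 2) with (- c) by (unfold c; field).
  assert (He : 0 < exp (- c)) by apply exp_pos.
  set (R3 := exp (3 * c)).
  assert (HR3 : 1 + 3 * c <= R3) by apply exp_ineq1_le.
  assert (Hr : exp (- (3 * c)) = / R3) by (unfold R3; apply exp_Ropp).
  assert (Hx : 0 < exp (- (3 * c) * INR N)) by apply exp_pos.
  assert (Hx1 : exp (- (3 * c) * INR N) <= 1).
  { rewrite <- exp_0. apply exp_le. pose proof (pos_INR N). nra. }
  set (s := sqrt 2 / sqrt y).
  assert (Hsy : s * y >= 1).
  { unfold s. assert (0 < sqrt y) by (apply sqrt_lt_R0; lra).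
    replace (sqrt 2 / sqrt y * y) with (sqrt 2 * sqrt y).
    2:{ rewrite <- (sqrt_sqrt y) at 3 by lra. field. lra. }
    rewrite <- sqrt_mult by lra. rewrite <- sqrt_1. apply Rle_ge, sqrt_le_1_alt. lra. }
  assert (Hs : 0 <= s).
  { unfold s. apply Rle_mult_inv_pos. apply sqrt_pos. apply sqrt_lt_R0; lra. }
  assert (Hkey : 2 * R3 <= (2 + s) * (R3 - 1)).
  { unfold c in HR3. nra. }
  rewrite Hr. set (x := exp (- (3 * c) * INR N)) in *.
  assert (HR3p : 1 < R3) by nra.
  apply Rplus_le_compat_l.
  replace (2 * exp (- c) * (1 - x) / (1 - / R3)) with ((2 * (1 - x) * R3 * / (R3 - 1)) * exp (- c)) by (field; lra).
  apply Rmult_le_compat_r; [lra|].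
  assert (Hi : / (R3 - 1) * (R3 - 1) = 1) by (field; lra).
  assert (Hip : 0 < / (R3 - 1)) by (apply Rinv_0_lt_compat; lra).
  set (i := / (R3 - 1)) in *. nra.
Qed.

Lemma modulus_bound (t : Siegel2) (m1 m2 : R) :
  0 < y1 t -> 0 <= 2 * y12 t -> 2 * y12 t <= y1 t -> y1 t <= y2 t ->
  exp (- PI * (y1 t * m1 * m1 + 2 * y12 t * m1 * m2 + y2 t * m2 * m2)
       - 2 * PI * (m1 * 0 + m2 * 0))
  <= exp (- (PI * y1 t / 2 * (m1 * m1))) * exp (- (PI * y2 t / 2 * (m2 * m2))).
Proof.
  intros H1 H2 H3 H4. rewrite <- exp_plus. apply exp_le.
  pose proof PI_RGT_0.
  assert (0 <= y1 t * m1 * m1 + 2 * y12 t * m1 * m2 + y2 t * m2 * m2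
               - (y1 t * m1 * m1 + y2 t * m2 * m2) / 2).
  { replace (y1 t * m1 * m1 + 2 * y12 t * m1 * m2 + y2 t * m2 * m2
               - (y1 t * m1 * m1 + y2 t * m2 * m2) / 2)
      with (y12 t * ((m1 + m2) * (m1 + m2)) + (y1 t / 2 - y12 t) * (m1 * m1 + m2 * m2)
            + (y2 t - y1 t) / 2 * (m2 * m2)) by field.
    assert (0 <= y12 t * ((m1 + m2) * (m1 + m2))) by (apply Rmult_le_pos; [lra | pose proof (Rle_0_sqr (m1+m2)); pose proof (Rle_0_sqr m1); pose proof (Rle_0_sqr m2); unfold Rsqr in *; lra]).
    assert (0 <= (y1 t / 2 - y12 t) * (m1 * m1 + m2 * m2)) by (apply Rmult_le_pos; [lra | pose proof (Rle_0_sqr (m1+m2)); pose proof (Rle_0_sqr m1); pose proof (Rle_0_sqr m2); unfold Rsqr in *; lra]).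
    assert (0 <= (y2 t - y1 t) / 2 * (m2 * m2)) by (apply Rmult_le_pos; [lra | pose proof (Rle_0_sqr (m1+m2)); pose proof (Rle_0_sqr m1); pose proof (Rle_0_sqr m2); unfold Rsqr in *; lra]).
    lra. }
  nra.
Qed.

Definition FF (t : Siegel2) (n1 n2 : Z) : R := gg (PI * y1 t / 2) n1 * gg (PI * y2 t / 2) n2.

Lemma term_bound (t : Siegel2) b1 b2 n1 n2 :
  0 < y1 t -> 0 <= 2 * y12 t -> 2 * y12 t <= y1 t -> y1 t <= y2 t ->
  Rabs (fst (theta_term 0 0 b1 b2 0 0 0 0 t n1 n2)) <= FF t n1 n2 /\
  Rabs (snd (theta_term 0 0 b1 b2 0 0 0 0 t n1 n2)) <= FF t n1 n2.
Proof.
  intros H1 H2 H3 H4. unfold theta_term, FF, gg. cbv beta zeta. simpl fst; simpl snd.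
  pose proof (modulus_bound t (IZR n1 + 0) (IZR n2 + 0) H1 H2 H3 H4) as HM.
  rewrite !Rplus_0_r in HM |- *.
  set (M := exp _) in HM |- *.
  assert (0 < M) by apply exp_pos.
  split; rewrite Rabs_mult, (Rabs_pos_eq M) by lra.
  - pose proof (COS_bound (2 * PI * (/ 2 * (x1 t * IZR n1 * IZR n1 + 2 * x12 t * IZR n1 * IZR n2 + x2 t * IZR n2 * IZR n2) +
          IZR n1 * (0 + b1) + IZR n2 * (0 + b2)))) as Hc.
    assert (Rabs (cos (2 * PI * (/ 2 * (x1 t * IZR n1 * IZR n1 + 2 * x12 t * IZR n1 * IZR n2 + x2 t * IZR n2 * IZR n2) +
          IZR n1 * (0 + b1) + IZR n2 * (0 + b2)))) <= 1) by (apply Rabs_le; lra).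
    nra.
  - pose proof (SIN_bound (2 * PI * (/ 2 * (x1 t * IZR n1 * IZR n1 + 2 * x12 t * IZR n1 * IZR n2 + x2 t * IZR n2 * IZR n2) +
          IZR n1 * (0 + b1) + IZR n2 * (0 + b2)))) as Hc.
    assert (Rabs (sin (2 * PI * (/ 2 * (x1 t * IZR n1 * IZR n1 + 2 * x12 t * IZR n1 * IZR n2 + x2 t * IZR n2 * IZR n2) +
          IZR n1 * (0 + b1) + IZR n2 * (0 + b2)))) <= 1) by (apply Rabs_le; lra).
    nra.
Qed.

Lemma D2_FF t N : D2 (FF t) N = S1 (gg (PI * y1 t / 2)) N * S1 (gg (PI * y2 t / 2)) N.
Proof.
  unfold D2, FF.
  rewrite (S1_ext _ (fun n1 => S1 (gg (PI * y2 t / 2)) N * gg (PI * y1 t / 2) n1)).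
  2:{ intro x. unfold S1. rewrite sumR_map_scal. ring. }
  unfold S1 at 1. rewrite sumR_map_scal. fold (S1 (gg (PI * y1 t / 2)) N). ring.
Qed.

Lemma S1_nonneg g N : (forall x, 0 <= g x) -> 0 <= S1 g N.
Proof. intro; unfold S1; apply sumR_map_nonneg; auto. Qed.

Lemma cauchy_dom f F (K : R) :
  (forall x y, Rabs (f x y) <= F x y) -> (forall N, D2 F N <= K) ->
  Cauchy_crit (D2 f).
Proof.
  intros Hf HK.
  assert (HF : forall x y, Rabs (F x y) <= F x y).
  { intros x y. rewrite Rabs_pos_eq. lra. eapply Rle_trans; [apply Rabs_pos| apply Hf]. }
  assert (Hg : Un_growing (D2 F)).
  { intro n. pose proof (D2_diff F F n 1 HF). rewrite Nat.add_1_r in H.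
    pose proof (Rabs_pos (D2 F (S n) - D2 F n)). lra. }
  assert (Hub : has_ub (D2 F)).
  { exists K. intros r [i ->]. apply HK. }
  pose proof (CV_Cauchy _ (growing_cv _ Hg Hub)) as HC.
  intros eps Heps. destruct (HC eps Heps) as [N0 HN0]. exists N0.
  intros n m Hn Hm. specialize (HN0 n m Hn Hm). unfold Rdist in *.
  destruct (Nat.le_ge_cases n m) as [Hnm|Hnm].
  - replace m with (n + (m - n))%nat in * by lia.
    pose proof (D2_diff f F n (m - n) Hf).
    rewrite Rabs_minus_sym. eapply Rle_lt_trans; [exact H|].
    rewrite Rabs_minus_sym in HN0. eapply Rle_lt_trans; [apply Rle_abs|exact HN0].
  - replace n with (m + (n - m))%nat in * by lia.
    pose proof (D2_diff f F m (n - m) Hf).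
    eapply Rle_lt_trans; [exact H|].
    eapply Rle_lt_trans; [apply Rle_abs|exact HN0].
Qed.

Lemma lim_lower (u : nat -> R) l a : Un_cv u l -> (forall N, a <= u N) -> a <= l.
Proof.
  intros Hu Ha. destruct (Rle_or_lt a l) as [h|h]; [exact h|].
  destruct (Hu (a - l)) as [N HN]; [lra|]. specialize (HN N (le_n N)). specialize (Ha N).
  unfold Rdist in HN. apply Rabs_def2 in HN. lra.
Qed.

Theorem mainTheorem13 (t : Siegel2) (b1 b2 : R)
  (Ht : in_F2 t) (Hb1 : b1 = 0 \/ b1 = 1/2) (Hb2 : b2 = 0 \/ b2 = 1/2) :
  (exists re im : R,
     is_theta 0 0 b1 b2 0 0 0 0 t re im /\
     theta_lower_bound t <= sqrt (re * re + im * im)) /\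
  (2 <= y1 t -> 0 < theta_lower_bound t).
Proof.
  destruct Ht as [[Hy1 Hdet] [Hx1 [Hx12 [Hx2 [Hy12a [Hy12b [Hy12 Hsp]]]]]]].
  assert (Hyh : 1/2 <= y1 t).
  { specialize (Hsp (mkM2Z 0 0 0 1) (mkM2Z (-1) 0 0 0) (mkM2Z 1 0 0 0) (mkM2Z 0 0 0 1)).
    assert (Hs : is_Sp4Z (mkM2Z 0 0 0 1) (mkM2Z (-1) 0 0 0) (mkM2Z 1 0 0 0) (mkM2Z 0 0 0 1))
      by (unfold is_Sp4Z, sym2; vm_compute; repeat split; reflexivity).
    specialize (Hsp Hs). unfold det_CtauD_norm2 in Hsp. cbn [e11 e12 e21 e22] in Hsp.
    assert (x1 t * x1 t <= 1/4).
    { destruct (Rcase_abs (x1 t)); [rewrite Rabs_left in Hx1 by lra | rewrite Rabs_right in Hx1 by lra]; nra. }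
    nra. }
  set (A1 := (2 + sqrt 2 / sqrt (y1 t)) * exp (- PI * y1 t / 2)).
  set (A2 := (2 + sqrt 2 / sqrt (y2 t)) * exp (- PI * y2 t / 2)).
  assert (HS1 : forall N, S1 (gg (PI * y1 t / 2)) N <= 1 + A1) by (intro; apply S1_gg_bound; lra).
  assert (HS2 : forall N, S1 (gg (PI * y2 t / 2)) N <= 1 + A2) by (intro; apply S1_gg_bound; lra).
  assert (HK : forall N, D2 (FF t) N <= (1 + A1) * (1 + A2)).
  { intro N. rewrite D2_FF. apply Rmult_le_compat; try apply S1_nonneg; try (intro; apply Rlt_le, gg_pos); auto. }
  assert (HFb := fun n1 n2 => term_bound t b1 b2 n1 n2 Hy1 Hy12a Hy12b Hy12).
  split.
  - set (fre := fun n1 n2 => fst (theta_term 0 0 b1 b2 0 0 0 0 t n1 n2)).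
    set (fim := fun n1 n2 => snd (theta_term 0 0 b1 b2 0 0 0 0 t n1 n2)).
    assert (Hre : forall x y, Rabs (fre x y) <= FF t x y) by (intros; apply HFb).
    assert (Him : forall x y, Rabs (fim x y) <= FF t x y) by (intros; apply HFb).
    destruct (R_complete _ (cauchy_dom fre (FF t) _ Hre HK)) as [re Hcre].
    destruct (R_complete _ (cauchy_dom fim (FF t) _ Him HK)) as [im Hcim].
    exists re, im. split; [split; assumption|].
    assert (Hlow : theta_lower_bound t <= re).
    { apply (lim_lower (D2 fre)); [exact Hcre|].
      intro N. pose proof (D2_diff fre (FF t) 0 N Hre) as Hd. simpl plus in Hd.
      assert (E0 : D2 fre 0 = 1).
      { unfold D2. rewrite !S1_0. unfold fre, theta_term. simpl fst.
        match goal with |- exp ?a * cos ?b = 1 => replace a with 0 by ring; replace b with 0 by ring end.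
        rewrite exp_0, cos_0. ring. }
      assert (F0 : D2 (FF t) 0 = 1).
      { unfold D2. rewrite !S1_0. unfold FF, gg.
        replace (- (PI * y1 t / 2 * (IZR 0 * IZR 0))) with 0 by ring.
        replace (- (PI * y2 t / 2 * (IZR 0 * IZR 0))) with 0 by ring.
        rewrite exp_0. ring. }
      rewrite E0, F0 in Hd. specialize (HK N). pose proof (Rle_abs (D2 fre N - 1)); pose proof (Rle_abs (-(D2 fre N - 1))); rewrite Rabs_Ropp in *.
      unfold theta_lower_bound. fold A1 A2. lra. }
    eapply Rle_trans; [exact Hlow|].
    eapply Rle_trans; [apply Rle_abs|].
    rewrite <- sqrt_Rsqr_abs. apply sqrt_le_1_alt. unfold Rsqr.
    pose proof (Rle_0_sqr im). unfold Rsqr in *. lra.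
  - intro H2. unfold theta_lower_bound. fold A1 A2.
    assert (He3 : exp (- PI) <= / 8).
    { rewrite exp_Ropp. apply Rinv_le_contravar; [lra|].
      pose proof PI2_3_2.
      assert (exp 1 >= 2) by (pose proof (exp_ineq1_le 1); lra).
      assert (exp 3 = exp 1 * exp 1 * exp 1) by (rewrite <- !exp_plus; f_equal; ring).
      assert (exp 3 <= exp PI) by (apply exp_le; lra). nra. }
    assert (HA : forall y, 2 <= y -> 0 <= (2 + sqrt 2 / sqrt y) * exp (- PI * y / 2) <= 3 / 8).
    { intros y Hy.
      assert (0 < sqrt y) by (apply sqrt_lt_R0; lra).
      assert (sqrt 2 <= sqrt y) by (apply sqrt_le_1_alt; lra).
      assert (0 <= sqrt 2 / sqrt y <= 1).
      { split. apply Rle_mult_inv_pos; [apply sqrt_pos|lra].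
        apply (Rmult_le_reg_r (sqrt y)); [lra|]. unfold Rdiv. rewrite Rmult_assoc, Rinv_l; lra. }
      assert (exp (- PI * y / 2) <= exp (- PI)) by (apply exp_le; pose proof PI_RGT_0; nra).
      pose proof (exp_pos (- PI * y / 2)). split; nra. }
    destruct (HA (y1 t) H2). destruct (HA (y2 t)); [lra|]. unfold A1, A2. nra.
Qed.
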